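(* Let $x,y,z\ge 0$ with at most one of them zero, and $p>0$ (the approximation is intended for the regime $x,y,z\ll p$). Let $a=(x+y+z)/3$ and $b=(\sqrt3/2)(xy+xz+yz)^{1/2}$. Then $$R_J(x,y,z,p)=\frac3p R_F(x,y,z)+\frac{3\pi}{2p^{3/2}}(-1+r),\quad\text{where}\quad \frac{\sqrt{b/p}}{1+\sqrt{b/p}}<r<\frac32\,\frac{\sqrt{a/p}}{1+\sqrt{a/p}}.$$ In the complete case ($z=0$, $x,y>0$), $$R_J(x,y,0,p)=\frac3p\left(R_F(x,y,0)-\frac{\pi}{2\sqrt p}\right)\left(1+\frac{\theta/p}{1-\theta/p}\right),$$ where $\sqrt{xy}\le\theta\le(x+y)/2$, with equalities iff $x=y$.
   Context: For $x,y,z\ge 0$ with at most one zero and $p>0$: $R_F(x,y,z)=\frac12\int_0^\infty[(t+x)(t+y)(t+z)]^{-1/2}\,dt$ and $R_J(x,y,z,p)=\frac32\int_0^\infty[(t+x)(t+y)(t+z)]^{-1/2}(t+p)^{-1}\,dt$. *)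

(* Defs.v *)
From Stdlib Require Import Reals.
From Coquelicot Require Import Coquelicot.
Open Scope R_scope.

Definition RF_integrand (x y z : R) (t : R) : R :=
  / sqrt ((t + x) * (t + y) * (t + z)).

(* R_F(x,y,z) = 1/2 \int_0^\infty [(t+x)(t+y)(t+z)]^{-1/2} dt,
   as an improper integral over ]0, +oo[ (the integrand may be singular at
   t = 0 when one argument is zero). *)
Definition RF (x y z : R) : R :=
  / 2 * RInt_gen (RF_integrand x y z) (at_right 0) (Rbar_locally p_infty).

Definition RJ (x y z p : R) : R :=
  3 / 2 * RInt_gen (fun t => RF_integrand x y z t / (t + p))
                   (at_right 0) (Rbar_locally p_infty).

(* Main.v *)
Require Import Defs.
From Stdlib Require Import Reals Lra Psatz.
From Coquelicot Require Import Coquelicot.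
Open Scope R_scope.


Notation F0 := (at_right 0).
Notation Finf := (Rbar_locally p_infty).

Lemma ev_pos : filter_prod F0 Finf (fun ab => 0 < fst ab /\ 0 < snd ab).
Proof.
  apply Filter_prod with (fun a => 0 < a) (fun b => 0 < b).
  - exists (mkposreal 1 Rlt_0_1); intros; assumption.
  - exists 0; intros; assumption.
  - intros; simpl; split; assumption.
Qed.

Lemma ev_pos' : filter_prod F0 Finf (fun ab => forall t, Rmin (fst ab) (snd ab) <= t <= Rmax (fst ab) (snd ab) -> 0 < t).
Proof.
  eapply filter_imp; [|exact ev_pos]. intros [u v] [Hu Hv] t Ht; simpl in *.
  destruct Ht as [H1 _]. eapply Rlt_le_trans; [|exact H1].
  unfold Rmin; destruct Rle_dec; lra.
Qed.

Lemma gen_deriv (G g : R -> R) (l0 l1 : R) :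
  (forall t, 0 < t -> is_derive G t (g t)) ->
  (forall t, 0 < t -> continuous g t) ->
  filterlim G F0 (locally l0) -> filterlim G Finf (locally l1) ->
  is_RInt_gen g F0 Finf (l1 - l0).
Proof.
  intros HD HC H0 H1.
  apply (is_RInt_gen_ext (Derive G)).
  - eapply filter_imp; [|exact ev_pos']. intros ab Hab t Ht.
    apply is_derive_unique, HD, Hab; lra.
  - apply is_RInt_gen_Derive; auto.
    + eapply filter_imp; [|exact ev_pos']. intros ab Hab t Ht.
      eexists; apply HD, Hab, Ht.
    + eapply filter_imp; [|exact ev_pos']. intros ab Hab t Ht.
      assert (0 < t) by (apply Hab, Ht).
      apply (continuous_ext_loc _ g).
      * assert (Hp: 0 < t/2) by lra.
        exists (mkposreal _ Hp). intros u Hu. symmetry. apply is_derive_unique, HD.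
        unfold ball in Hu; simpl in Hu; unfold AbsRing_ball, abs, minus, plus, opp in Hu; simpl in Hu.
        apply Rabs_def2 in Hu. lra.
      * apply HC; auto.
Qed.

Lemma lim_at0 (H : R -> R) : continuous H 0 -> filterlim H F0 (locally (H 0)).
Proof.
  intros HC. eapply filterlim_filter_le_1; [|exact HC].
  intros P [d Hd]. exists d. intros; apply Hd; auto.
Qed.

Lemma lim_inv_inf : filterlim Rinv Finf F0.
Proof.
  intros P [d Hd]. exists (/ d). intros t Ht.
  assert (0 < /d) by (apply Rinv_0_lt_compat, cond_pos).
  assert (0 < t) by lra.
  apply Hd.
  - unfold ball; simpl; unfold AbsRing_ball, abs, minus, plus, opp; simpl.
    rewrite Ropp_0, Rplus_0_r, Rabs_pos_eq.
    + rewrite <- (Rinv_inv d). apply Rinv_lt_contravar; auto. nra.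
    + left; apply Rinv_0_lt_compat; auto.
  - apply Rinv_0_lt_compat; auto.
Qed.

Lemma lim_inf (G H : R -> R) : (forall t, 0 < t -> G t = H (/ t)) -> continuous H 0 ->
  filterlim G Finf (locally (H 0)).
Proof.
  intros HE HC.
  apply (filterlim_ext_loc (fun t => H (/ t))).
  - exists 0. intros; symmetry; apply HE; auto.
  - eapply filterlim_comp; [exact lim_inv_inf|]. apply lim_at0; auto.
Qed.


Lemma ballR (x y e : R) : Rabs (y - x) < e -> ball x e y.
Proof. intros H. unfold ball; simpl; unfold AbsRing_ball, abs, minus, plus, opp; simpl. exact H. Qed.
Lemma ballR' (x y e : R) : ball x e y -> Rabs (y - x) < e.
Proof. intros H. unfold ball in H; simpl in H; unfold AbsRing_ball, abs, minus, plus, opp in H; simpl in H. exact H. Qed.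

Lemma exR (f : R -> R) u v : 0 < u -> 0 < v -> (forall t, 0 < t -> continuous f t) -> ex_RInt f u v.
Proof.
  intros Hu Hv HC. apply (@ex_RInt_continuous R_CompleteNormedModule). intros z Hz. apply HC.
  destruct Hz as [Hz _]. eapply Rlt_le_trans; [|exact Hz]. unfold Rmin; destruct Rle_dec; lra.
Qed.

Lemma dom_bound (f g G : R -> R) :
  (forall t, 0 < t -> continuous f t) -> (forall t, 0 < t -> 0 <= f t <= g t) ->
  (forall t, 0 < t -> is_derive G t (g t)) -> (forall t, 0 < t -> continuous g t) ->
  forall u v, 0 < u -> 0 < v -> Rabs (RInt f u v) <= Rabs (G v - G u).
Proof.
  intros Hf Hfg HD Hg.
  assert (K: forall u v, 0 < u -> 0 < v -> u <= v -> 0 <= RInt f u v <= G v - G u).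
  { intros u v Hu Hv Huv. split.
    - apply RInt_ge_0; auto. apply exR; auto. intros t Ht; apply Hfg; lra.
    - replace (G v - G u) with (RInt g u v).
      + apply RInt_le; auto; try (apply exR; auto). intros t Ht; apply Hfg; lra.
      + apply is_RInt_unique. apply (is_RInt_derive G g).
        * intros t Ht. apply HD. destruct Ht as [Ht _]. eapply Rlt_le_trans; [|exact Ht]. unfold Rmin; destruct Rle_dec; lra.
        * intros t Ht. apply Hg. destruct Ht as [Ht _]. eapply Rlt_le_trans; [|exact Ht]. unfold Rmin; destruct Rle_dec; lra. }
  intros u v Hu Hv. destruct (Rle_dec u v) as [H|H].
  - specialize (K u v Hu Hv H). rewrite !Rabs_pos_eq; lra.
  - assert (v <= u) by lra. specialize (K v u Hv Hu H0).
    rewrite <- opp_RInt_swap by (apply exR; auto).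
    unfold opp; simpl. rewrite Rabs_Ropp. replace (G v - G u) with (- (G u - G v)) by ring.
    rewrite Rabs_Ropp, !Rabs_pos_eq; lra.
Qed.

Lemma dom_ex (f g G : R -> R) G0 G1 :
  (forall t, 0 < t -> continuous f t) -> (forall t, 0 < t -> 0 <= f t <= g t) ->
  (forall t, 0 < t -> is_derive G t (g t)) -> (forall t, 0 < t -> continuous g t) ->
  filterlim G F0 (locally G0) -> filterlim G Finf (locally G1) ->
  ex_RInt_gen f F0 Finf.
Proof.
  intros Hf Hfg HD Hg H0 H1.
  pose proof (dom_bound f g G Hf Hfg HD Hg) as DB.
  assert (Hc: exists y, filterlim (fun ab => RInt f (fst ab) (snd ab)) (filter_prod F0 Finf) (locally y)).
  { apply filterlim_locally_cauchy. intros eps.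
    assert (He: 0 < eps / 4) by (destruct eps; simpl; lra).
    pose (e4 := mkposreal _ He).
    exists (fun ab => (0 < fst ab /\ 0 < snd ab) /\ (ball G0 e4 (G (fst ab)) /\ ball G1 e4 (G (snd ab)))).
    split.
    - apply filter_and; [exact ev_pos|].
      apply Filter_prod with (fun a => ball G0 e4 (G a)) (fun b => ball G1 e4 (G b)).
      + apply H0. apply locally_ball.
      + apply H1. apply locally_ball.
      + intros; simpl; split; auto.
    - intros [a b] [a' b'] [[Ha Hb] [Ga Gb]] [[Ha' Hb'] [Ga' Gb']]; simpl in *.
      apply ballR.
      apply ballR' in Ga. apply ballR' in Gb. apply ballR' in Ga'. apply ballR' in Gb'.
      assert (E: RInt f a' b' = RInt f a' a + RInt f a b + RInt f b b').
      { rewrite <- (RInt_Chasles f a' a b') by (apply exR; auto).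
        rewrite <- (RInt_Chasles f a b b') by (apply exR; auto). unfold plus; simpl; ring. }
      rewrite E.
      pose proof (DB a' a Ha' Ha). pose proof (DB b b' Hb Hb').
      replace (RInt f a' a + RInt f a b + RInt f b b' - RInt f a b) with (RInt f a' a + RInt f b b') by ring.
      eapply Rle_lt_trans; [apply Rabs_triang|].
      assert (Rabs (G a - G a') < eps / 2).
      { replace (G a - G a') with ((G a - G0) - (G a' - G0)) by ring.
        unfold Rminus at 1; eapply Rle_lt_trans; [apply Rabs_triang|]. rewrite Rabs_Ropp. lra. }
      assert (Rabs (G b' - G b) < eps / 2).
      { replace (G b' - G b) with ((G b' - G1) - (G b - G1)) by ring.
        unfold Rminus at 1; eapply Rle_lt_trans; [apply Rabs_triang|]. rewrite Rabs_Ropp. lra. }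
      lra. }
  destruct Hc as [y Hy]. exists y.
  unfold is_RInt_gen.
  apply (filterlimi_lim_ext_loc (fun ab => RInt f (fst ab) (snd ab))); auto.
  eapply filter_imp; [|exact ev_pos]. intros [a b] [Ha Hb]; simpl.
  apply (@RInt_correct R_CompleteNormedModule), exR; auto.
Qed.

Lemma gen_ge (h : R -> R) l :
  (forall t, 0 < t -> continuous h t) -> (forall t, 0 < t -> 0 <= h t) ->
  is_RInt_gen h F0 Finf l -> RInt h 1 2 <= l.
Proof.
  intros HC Hp HI. apply Rnot_lt_le. intros Hlt.
  set (c := RInt h 1 2) in *.
  assert (He: 0 < c - l) by lra.
  assert (Hb := HI (ball l (mkposreal _ He)) (locally_ball _ _)).
  simpl in Hb. unfold filtermapi in Hb.
  assert (Hq: filter_prod F0 Finf (fun ab => 0 < fst ab < 1 /\ 2 < snd ab)).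
  { apply Filter_prod with (fun a => 0 < a < 1) (fun b => 2 < b).
    - exists (mkposreal 1 Rlt_0_1). intros u Hu Hu0. apply ballR' in Hu. simpl in Hu.
      rewrite Rminus_0_r, Rabs_pos_eq in Hu; lra.
    - exists 2; auto.
    - intros; simpl; auto. }
  destruct (filter_ex _ (filter_and _ _ Hb Hq)) as [[a b] [[y [Hy Hyb]] [Ha Hb2]]].
  simpl in *. apply ballR' in Hyb. simpl in Hyb.
  apply (@is_RInt_unique R_CompleteNormedModule) in Hy. subst y.
  assert (c <= RInt h a b).
  { rewrite <- (RInt_Chasles h a 1 b) by (apply exR; auto; lra).
    rewrite <- (RInt_Chasles h 1 2 b) by (apply exR; auto; lra).
    unfold plus; simpl.
    assert (0 <= RInt h a 1) by (apply RInt_ge_0; [lra| apply exR; auto; lra| intros; apply Hp; lra]).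
    assert (0 <= RInt h 2 b) by (apply RInt_ge_0; [lra| apply exR; auto; lra| intros; apply Hp; lra]).
    unfold c; lra. }
  apply Rabs_def2 in Hyb. lra.
Qed.

Lemma gen_ge0 (h : R -> R) l :
  (forall t, 0 < t -> continuous h t) -> (forall t, 0 < t -> 0 <= h t) ->
  is_RInt_gen h F0 Finf l -> 0 <= l.
Proof.
  intros HC Hp HI. eapply Rle_trans; [|exact (gen_ge h l HC Hp HI)].
  apply RInt_ge_0; [lra| apply exR; auto; lra| intros; apply Hp; lra].
Qed.

Lemma gen_gt0 (h : R -> R) l :
  (forall t, 0 < t -> continuous h t) -> (forall t, 0 < t -> 0 < h t) ->
  is_RInt_gen h F0 Finf l -> 0 < l.
Proof.
  intros HC Hp HI. eapply Rlt_le_trans; [|apply (gen_ge h l HC); auto; intros; left; auto].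
  apply RInt_gt_0; [lra| intros; apply Hp; lra| intros; apply HC; lra].
Qed.


Lemma exdc (f : R -> R) x : ex_derive f x -> continuous f x.
Proof. apply (@ex_derive_continuous R_AbsRing R_NormedModule). Qed.
Lemma cmult (f h : R -> R) x : continuous f x -> continuous h x -> continuous (fun y => f y * h y) x.
Proof. apply (@continuous_mult R_UniformSpace R_AbsRing f h x). Qed.
Lemma cminus (f h : R -> R) x : continuous f x -> continuous h x -> continuous (fun y => f y - h y) x.
Proof. apply (@continuous_minus R_UniformSpace R_AbsRing R_NormedModule f h x). Qed.
Lemma cconst (k x : R) : continuous (fun _ => k) x.
Proof. apply (@continuous_const R_UniformSpace R_UniformSpace). Qed.

Definition g (c t : R) := / (sqrt t * (t + c)).

Lemma sqrt_sq t : 0 <= t -> sqrt t * sqrt t = t.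
Proof. intros; apply sqrt_sqrt; auto. Qed.

Lemma g_der c t : 0 < c -> 0 < t -> is_derive (fun t => 2 / sqrt c * atan (sqrt t / sqrt c)) t (g c t).
Proof.
  intros Hc Ht. unfold g.
  assert (Hsc := sqrt_lt_R0 c Hc). assert (Hst := sqrt_lt_R0 t Ht).
  auto_derive. lra.
  pose proof (sqrt_sq c (Rlt_le _ _ Hc)). pose proof (sqrt_sq t (Rlt_le _ _ Ht)).
  set (s := sqrt t) in *; set (q := sqrt c) in *. rewrite <- H, <- H0. field. lra.
Qed.


Lemma g_cont c t : 0 < c -> 0 < t -> continuous (g c) t.
Proof.
  intros Hc Ht. unfold g. apply exdc.
  assert (Hst := sqrt_lt_R0 t Ht). auto_derive. split. lra. split; auto. nra.
Qed.

Lemma atan_inf_eq (c t : R) : 0 < c -> 0 < t ->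
  atan (sqrt t / sqrt c) = PI / 2 - atan (sqrt (/ t) * sqrt c).
Proof.
  intros Hc Ht.
  assert (Hsc := sqrt_lt_R0 c Hc). assert (Hst := sqrt_lt_R0 t Ht).
  rewrite <- atan_inv.
  - f_equal. rewrite sqrt_inv. field. split; lra.
  - apply Rmult_lt_0_compat; auto. apply sqrt_lt_R0, Rinv_0_lt_compat; auto.
Qed.

Lemma J_int c : 0 < c -> is_RInt_gen (g c) F0 Finf (PI / sqrt c).
Proof.
  intros Hc.
  assert (Hsc := sqrt_lt_R0 c Hc).
  set (G := fun t => 2 / sqrt c * atan (sqrt t / sqrt c)).
  set (H := fun u => 2 / sqrt c * (PI / 2 - atan (sqrt u * sqrt c))).
  replace (PI / sqrt c) with (H 0 - G 0).
  2:{ unfold H, G. rewrite sqrt_0. replace (0 / sqrt c) with 0 by (field; lra).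
      rewrite Rmult_0_l, atan_0. field. lra. }
  apply (gen_deriv G).
  - intros; apply g_der; auto.
  - intros; apply g_cont; auto.
  - apply lim_at0. unfold G. apply cmult. apply cconst.
    apply continuous_atan_comp. unfold Rdiv. apply cmult. apply continuous_sqrt. apply cconst.
  - apply lim_inf.
    + intros t Ht. unfold G, H. rewrite atan_inf_eq; auto.
    + unfold H. apply cmult. apply cconst.
      apply (cminus (fun _ => PI/2)). apply cconst.
      apply continuous_atan_comp. apply cmult. apply continuous_sqrt. apply cconst.
Qed.

Lemma cplus (f h : R -> R) x : continuous f x -> continuous h x -> continuous (fun y => f y + h y) x.
Proof. apply (@continuous_plus R_UniformSpace R_AbsRing R_NormedModule f h x). Qed.

Lemma K_eq (p : R) : 0 < p -> is_RInt_gen (fun t => g p t / (t + p)) F0 Finf (PI / (sqrt p * sqrt p * (sqrt p + sqrt p))).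
Proof.
  intros Hp.
  assert (Hsp := sqrt_lt_R0 p Hp). pose proof (sqrt_sq p (Rlt_le _ _ Hp)) as Ep.
  set (G := fun t => sqrt t * / (p * (t + p)) + atan (sqrt t / sqrt p) / (p * sqrt p)).
  set (Hf := fun u => sqrt u * / (p * (1 + p * u)) + (PI / 2 - atan (sqrt u * sqrt p)) / (p * sqrt p)).
  replace (PI / (sqrt p * sqrt p * (sqrt p + sqrt p))) with (Hf 0 - G 0).
  2:{ unfold Hf, G. rewrite sqrt_0. replace (0 / sqrt p) with 0 by (field; lra).
      repeat rewrite Rmult_0_l. rewrite atan_0. set (q := sqrt p) in *. rewrite <- Ep. field. lra. }
  apply (gen_deriv G).
  - intros t Ht. unfold G, g.
    assert (Hst := sqrt_lt_R0 t Ht). pose proof (sqrt_sq t (Rlt_le _ _ Ht)) as Et.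
    auto_derive. repeat split; try lra; nra.
    set (s := sqrt t) in *; set (q := sqrt p) in *. rewrite <- Ep, <- Et. field. repeat split; nra.
  - intros t Ht. unfold g. apply exdc.
    assert (Hst := sqrt_lt_R0 t Ht). auto_derive. repeat split; try lra; nra.
  - apply lim_at0. unfold G. apply cplus. apply cmult. apply continuous_sqrt.
    apply exdc. auto_derive. nra.
    unfold Rdiv. apply cmult. apply continuous_atan_comp. apply cmult. apply continuous_sqrt. apply cconst. apply cconst.
  - apply lim_inf.
    + intros t Ht. unfold G, Hf. rewrite atan_inf_eq; auto. f_equal.
      assert (Hst := sqrt_lt_R0 t Ht). pose proof (sqrt_sq t (Rlt_le _ _ Ht)) as Et.
      rewrite sqrt_inv. set (s := sqrt t) in *. rewrite <- Et. field. repeat split; nra.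
    + unfold Hf. apply cplus. apply cmult. apply continuous_sqrt.
      apply exdc. auto_derive. nra.
      unfold Rdiv. apply cmult. apply (cminus (fun _ => PI/2)). apply cconst.
      apply continuous_atan_comp. apply cmult. apply continuous_sqrt. apply cconst. apply cconst.
Qed.

Lemma gen_ext_pos (f h : R -> R) l : (forall t, 0 < t -> f t = h t) ->
  is_RInt_gen f F0 Finf l -> is_RInt_gen h F0 Finf l.
Proof.
  intros E. apply is_RInt_gen_ext. eapply filter_imp; [|exact ev_pos'].
  intros ab Hab t Ht. apply E, Hab. lra.
Qed.

Lemma K_int (c p : R) : 0 < c -> 0 < p ->
  is_RInt_gen (fun t => g c t / (t + p)) F0 Finf (PI / (sqrt c * sqrt p * (sqrt c + sqrt p))).
Proof.
  intros Hc Hp. destruct (Req_dec c p) as [E|NE].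
  - subst c. apply K_eq; auto.
  - assert (Hsp := sqrt_lt_R0 p Hp). pose proof (sqrt_sq p (Rlt_le _ _ Hp)) as Ep.
    assert (Hsc := sqrt_lt_R0 c Hc). pose proof (sqrt_sq c (Rlt_le _ _ Hc)) as Ec.
    assert (Hd: sqrt c <> sqrt p). { intros Q. apply NE. rewrite <- Ec, <- Ep, Q. ring. }
    pose proof (is_RInt_gen_scal _ (/ (p - c)) _ (is_RInt_gen_minus _ _ _ _ (J_int c Hc) (J_int p Hp))) as HI.
    replace (PI / (sqrt c * sqrt p * (sqrt c + sqrt p))) with
      (scal (/ (p - c)) (minus (PI / sqrt c) (PI / sqrt p))).
    + revert HI. apply gen_ext_pos. intros t Ht.
      unfold scal, minus, plus, opp; simpl. unfold mult; simpl. unfold g.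
      assert (Hst := sqrt_lt_R0 t Ht).
      assert (p - c <> 0) by (intro Q; apply NE; lra).
      field. repeat split; try lra.
    + unfold scal, minus, plus, opp; simpl. unfold mult; simpl.
      assert (p - c <> 0) by (intro Q; apply NE; lra).
      set (q := sqrt p) in *; set (s := sqrt c) in *. rewrite <- Ep, <- Ec in *.
      field. repeat split; try lra.
Qed.

Lemma G_lim0 c : 0 < c -> filterlim (fun t => 2 / sqrt c * atan (sqrt t / sqrt c)) F0
   (locally ((fun t => 2 / sqrt c * atan (sqrt t / sqrt c)) 0)).
Proof.
  intros Hc. apply lim_at0. apply cmult. apply cconst.
  apply continuous_atan_comp. unfold Rdiv. apply cmult. apply continuous_sqrt. apply cconst.
Qed.

Lemma G_liminf c : 0 < c -> filterlim (fun t => 2 / sqrt c * atan (sqrt t / sqrt c)) Finf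
   (locally ((fun u => 2 / sqrt c * (PI / 2 - atan (sqrt u * sqrt c))) 0)).
Proof.
  intros Hc. apply lim_inf.
  + intros t Ht. rewrite atan_inf_eq; auto.
  + apply cmult. apply cconst.
    apply (cminus (fun _ => PI/2)). apply cconst.
    apply continuous_atan_comp. apply cmult. apply continuous_sqrt. apply cconst.
Qed.

Lemma lim_scal (G : R -> R) F {FF : Filter F} l k : filterlim G F (locally l) -> filterlim (fun t => k * G t) F (locally (k * l)).
Proof.
  intros H. eapply filterlim_comp; [exact H|]. apply (cmult (fun _ => k) (fun u => u)). apply cconst. apply continuous_id.
Qed.

Lemma dom_ex_g (f : R -> R) c k : 0 < c -> 0 < k ->
  (forall t, 0 < t -> continuous f t) -> (forall t, 0 < t -> 0 <= f t <= k * g c t) ->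
  ex_RInt_gen f F0 Finf.
Proof.
  intros Hc Hk Hf Hfg.
  apply (dom_ex f (fun t => k * g c t) (fun t => k * (2 / sqrt c * atan (sqrt t / sqrt c)))
    (k * (2 / sqrt c * atan (sqrt 0 / sqrt c))) (k * (2 / sqrt c * (PI / 2 - atan (sqrt 0 * sqrt c))))); auto.
  - intros t Ht. apply (is_derive_scal (fun t => 2 / sqrt c * atan (sqrt t / sqrt c))). apply g_der; auto.
  - intros t Ht. apply (cmult (fun _ => k)). apply cconst. apply g_cont; auto.
  - apply lim_scal. apply _. apply G_lim0; auto.
  - apply lim_scal. apply _. apply G_liminf; auto.
Qed.

Lemma gen_correct (f : R -> R) : ex_RInt_gen f F0 Finf -> is_RInt_gen f F0 Finf (RInt_gen f F0 Finf).
Proof.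
  exact (@RInt_gen_correct R_CompleteNormedModule F0 Finf (Proper_StrongProper _ (at_right_proper_filter 0)) (Proper_StrongProper _ (Rbar_locally_filter p_infty)) f).
Qed.

Lemma gen_unique (f : R -> R) l : is_RInt_gen f F0 Finf l -> RInt_gen f F0 Finf = l.
Proof.
  exact (@is_RInt_gen_unique R_CompleteNormedModule F0 Finf (Proper_StrongProper _ (at_right_proper_filter 0)) (Proper_StrongProper _ (Rbar_locally_filter p_infty)) f l).
Qed.

Lemma amgm3 u v w : 0 <= u -> 0 <= v -> 0 <= w -> 27 * (u * v * w) <= (u + v + w) ^ 3.
Proof. intros.
  assert (0 <= u+v+w) by lra.
  pose proof (Rmult_le_pos _ _ H2 (Rle_0_sqr (u-v))).
  pose proof (Rmult_le_pos _ _ H2 (Rle_0_sqr (v-w))).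
  pose proof (Rmult_le_pos _ _ H2 (Rle_0_sqr (u-w))).
  pose proof (Rmult_le_pos _ _ H (Rle_0_sqr (v-w))).
  pose proof (Rmult_le_pos _ _ H0 (Rle_0_sqr (u-w))).
  pose proof (Rmult_le_pos _ _ H1 (Rle_0_sqr (u-v))).
  unfold Rsqr in *. nra.
Qed.
Lemma lowpoly x y z t b : 0 <= x -> 0 <= y -> 0 <= z -> 0 < t -> 0 <= b -> b * b = 3/4 * (x*y+x*z+y*z) -> 0 < x*y+x*z+y*z ->
  t * (t + b) ^ 2 < (t + x) * (t + y) * (t + z).
Proof.
  intros. assert (2 * b <= x + y + z).
  { apply Rsqr_incr_0_var. unfold Rsqr. pose proof (Rle_0_sqr (x-y)). pose proof (Rle_0_sqr (z-y)). pose proof (Rle_0_sqr (x-z)). unfold Rsqr in *. nra. lra. }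
  assert (0 <= x*y*z) by (apply Rmult_le_pos; auto; apply Rmult_le_pos; auto).
  assert (0 < t*t) by nra.
  nra.
Qed.
Lemma uppoly t a P : 0 < a -> a/2 < t -> 0 <= P -> P <= (t+a)^3 -> (t - a/2)^2 * P < t^3 * (t+a)^2.
Proof.
  intros. assert (0 < (t - a/2)^2) by nra.
  apply Rle_lt_trans with ((t-a/2)^2 * (t+a)^3). apply Rmult_le_compat_l; lra.
  assert (0 < (t+a)^2 * a^2 * (3*t - a)) by (apply Rmult_lt_0_compat; [apply Rmult_lt_0_compat; apply pow_lt; lra|lra]).
  replace (t^3 * (t+a)^2) with ((t - a/2)^2 * (t+a)^3 + (t+a)^2 * a^2 * (3*t - a) / 4) by field.
  lra.
Qed.


Lemma sq_lt A B : 0 <= A -> 0 <= B -> A * A < B * B -> A < B.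
Proof. intros. nra. Qed.
Lemma sq_le A B : 0 <= A -> 0 <= B -> A * A <= B * B -> A <= B.
Proof. intros. nra. Qed.

Lemma Rpower32 p : 0 < p -> Rpower p (3/2) = p * sqrt p.
Proof.
  intros Hp. replace (3/2) with (1 + /2) by field. rewrite Rpower_plus, Rpower_1, Rpower_sqrt; auto.
Qed.

Definition b0f (x y z : R) := sqrt 3 / 2 * sqrt (x*y+x*z+y*z).

Lemma b0_pos (x y z : R) (He2 : 0 < x*y+x*z+y*z) : 0 < sqrt 3 / 2 * sqrt (x*y+x*z+y*z).
Proof. apply Rmult_lt_0_compat. apply Rmult_lt_0_compat. apply sqrt_lt_R0; lra. lra. apply sqrt_lt_R0; lra. Qed.

Lemma b0_sq (x y z : R) (He2 : 0 < x*y+x*z+y*z) : sqrt 3 / 2 * sqrt (x*y+x*z+y*z) * (sqrt 3 / 2 * sqrt (x*y+x*z+y*z)) = 3/4 * (x*y+x*z+y*z).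
Proof.
  replace (sqrt 3 / 2 * sqrt (x * y + x * z + y * z) * (sqrt 3 / 2 * sqrt (x * y + x * z + y * z)))
    with ((sqrt 3 * sqrt 3) * (sqrt (x * y + x * z + y * z) * sqrt (x * y + x * z + y * z)) / 4) by field.
  rewrite !sqrt_sq; lra.
Qed.

Lemma P_pos (x y z : R) (Hx : 0 <= x) (Hy : 0 <= y) (Hz : 0 <= z) t : 0 < t -> 0 < (t + x) * (t + y) * (t + z).
Proof. intros. apply Rmult_lt_0_compat; [apply Rmult_lt_0_compat|]; lra. Qed.

Lemma f_pos (x y z : R) (Hx : 0 <= x) (Hy : 0 <= y) (Hz : 0 <= z) t : 0 < t -> 0 < RF_integrand x y z t.
Proof. intros. unfold RF_integrand. apply Rinv_0_lt_compat, sqrt_lt_R0, P_pos; auto. Qed.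

Lemma f_lt_g (x y z : R) (Hx : 0 <= x) (Hy : 0 <= y) (Hz : 0 <= z) (He2 : 0 < x*y+x*z+y*z) t : 0 < t -> RF_integrand x y z t < g (sqrt 3 / 2 * sqrt (x*y+x*z+y*z)) t.
Proof.
  intros Ht. pose proof (b0_pos x y z He2). pose proof (b0_sq x y z He2). set (b0 := sqrt 3 / 2 * sqrt (x*y+x*z+y*z)) in *. unfold RF_integrand, g. pose proof (P_pos x y z Hx Hy Hz t Ht).
  apply Rinv_lt_contravar.
  - apply Rmult_lt_0_compat. apply Rmult_lt_0_compat. apply sqrt_lt_R0; lra. lra. apply sqrt_lt_R0; auto.
  - apply sq_lt. apply Rmult_le_pos. apply sqrt_pos. lra. apply sqrt_pos.
    rewrite sqrt_sq by lra.
    replace (sqrt t * (t + b0) * (sqrt t * (t + b0))) with ((sqrt t * sqrt t) * (t + b0)^2) by ring.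
    rewrite sqrt_sq by lra. apply lowpoly; auto; try lra.
Qed.

Lemma f_cont (x y z : R) (Hx : 0 <= x) (Hy : 0 <= y) (Hz : 0 <= z) t : 0 < t -> continuous (RF_integrand x y z) t.
Proof.
  intros Ht. unfold RF_integrand. apply exdc. pose proof (P_pos x y z Hx Hy Hz t Ht).
  auto_derive. split. lra. split; auto. pose proof (sqrt_lt_R0 _ H). lra.
Qed.

Lemma ex1 (x y z : R) (Hx : 0 <= x) (Hy : 0 <= y) (Hz : 0 <= z) (He2 : 0 < x*y+x*z+y*z) : ex_RInt_gen (RF_integrand x y z) F0 Finf.
Proof.
  apply (dom_ex_g _ (sqrt 3 / 2 * sqrt (x*y+x*z+y*z)) 1). apply b0_pos; auto. lra. apply f_cont; auto.
  intros t Ht. pose proof (f_lt_g x y z Hx Hy Hz He2 t Ht). pose proof (f_pos x y z Hx Hy Hz t Ht). lra.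
Qed.

Lemma ex2 (x y z p : R) (Hx : 0 <= x) (Hy : 0 <= y) (Hz : 0 <= z) (Hp : 0 < p) (He2 : 0 < x*y+x*z+y*z) : ex_RInt_gen (fun t => RF_integrand x y z t / (t + p)) F0 Finf.
Proof.
  apply (dom_ex_g _ (sqrt 3 / 2 * sqrt (x*y+x*z+y*z)) (/ p)). apply b0_pos; auto. apply Rinv_0_lt_compat; lra.
  - intros t Ht. apply (cmult (RF_integrand x y z) (fun t => / (t + p))). apply f_cont; auto.
    apply exdc. auto_derive. lra.
  - intros t Ht. pose proof (f_lt_g x y z Hx Hy Hz He2 t Ht). pose proof (f_pos x y z Hx Hy Hz t Ht). split.
    + unfold Rdiv. apply Rmult_le_pos. lra. left; apply Rinv_0_lt_compat; lra.
    + unfold Rdiv. rewrite Rmult_comm. apply Rmult_le_compat. left; apply Rinv_0_lt_compat; lra. lra.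
      apply Rlt_le, Rinv_lt_contravar; nra. lra.
Qed.



Lemma part1 x y z p : 0 <= x -> 0 <= y -> 0 <= z -> 0 < p -> 0 < x*y+x*z+y*z ->
    (let a := (x + y + z) / 3 in
     let b := sqrt 3 / 2 * sqrt (x * y + x * z + y * z) in
     exists r : R,
       RJ x y z p = 3 / p * RF x y z + 3 * PI / (2 * Rpower p (3 / 2)) * (-1 + r)
       /\ sqrt (b / p) / (1 + sqrt (b / p)) < r
       /\ r < 3 / 2 * (sqrt (a / p) / (1 + sqrt (a / p)))).
Proof.
  intros Hx Hy Hz Hp He2 a b.
  set (f := RF_integrand x y z).
  pose proof (gen_correct _ (ex1 x y z Hx Hy Hz He2)) as HI1.
  pose proof (gen_correct _ (ex2 x y z p Hx Hy Hz Hp He2)) as HI2.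
  fold f in HI1, HI2.
  set (I1 := RInt_gen f F0 Finf) in *.
  set (I2 := RInt_gen (fun t => f t / (t + p)) F0 Finf) in *.
  assert (ERF : RF x y z = / 2 * I1) by reflexivity.
  assert (ERJ : RJ x y z p = 3 / 2 * I2) by reflexivity.
  assert (Hb : 0 < b) by apply b0_pos, He2.
  assert (Ha : 0 < a) by (unfold a; nra).
  assert (HPI := PI_RGT_0).
  assert (Hsp := sqrt_lt_R0 p Hp). pose proof (sqrt_sq p (Rlt_le _ _ Hp)) as Ep.
  exists (1 + 2 * (p * sqrt p) / (3 * PI) * (RJ x y z p - 3 / p * RF x y z)).
  split; [|split].
  - rewrite Rpower32 by auto. field. lra.
  -
    pose proof (is_RInt_gen_minus _ _ _ _ (is_RInt_gen_minus _ _ _ _ (J_int b Hb) (is_RInt_gen_scal _ p _ (K_int b p Hb Hp)))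
                 (is_RInt_gen_minus _ _ _ _ HI1 (is_RInt_gen_scal _ p _ HI2))) as HL.
    apply (gen_ext_pos _ (fun t => (g b t - f t) * (t / (t + p)))) in HL.
    2:{ intros t Ht. unfold minus, plus, opp, scal; simpl. unfold mult; simpl. field. lra. }
    apply gen_gt0 in HL.
    2:{ intros t Ht. unfold g, f, RF_integrand. apply exdc. pose proof (P_pos x y z Hx Hy Hz t Ht).
        pose proof (sqrt_lt_R0 t Ht). auto_derive. repeat split; try lra; try nra. pose proof (sqrt_lt_R0 _ H). lra. }
    2:{ intros t Ht. apply Rmult_lt_0_compat. pose proof (f_lt_g x y z Hx Hy Hz He2 t Ht) as H'. change (f t < g b t) in H'. lra.
        apply Rdiv_lt_0_compat; lra. }
    unfold minus, plus, opp, scal in HL; simpl in HL. unfold mult in HL; simpl in HL.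
    rewrite ERJ, ERF. rewrite sqrt_div_alt by auto.
    pose proof (sqrt_lt_R0 b Hb) as Hsb. pose proof (sqrt_sq b (Rlt_le _ _ Hb)) as Eb.
    set (sb := sqrt b) in *. set (sp := sqrt p) in *.
    match goal with |- ?L < ?R => assert (E : R - L = sp / PI * (PI / sb + - (p * (PI / (sb * sp * (sb + sp)))) + - (I1 + - (p * I2)))) end.
    { rewrite <- Ep; try rewrite <- Eb. field. repeat split; lra. }
    assert (0 < sp / PI * (PI / sb + - (p * (PI / (sb * sp * (sb + sp)))) + - (I1 + - (p * I2)))).
    { apply Rmult_lt_0_compat; auto. apply Rdiv_lt_0_compat; lra. }
    lra.
  -
    pose proof (is_RInt_gen_plus _ _ _ _ (is_RInt_gen_minus _ _ _ _ (is_RInt_gen_scal _ (3/2*a) _ (K_int a p Ha Hp)) (J_int p Hp))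
                 (is_RInt_gen_minus _ _ _ _ HI1 (is_RInt_gen_scal _ p _ HI2))) as HU.
    apply (gen_ext_pos _ (fun t => (t * f t - (t - a/2) / (sqrt t * (t + a))) / (t + p))) in HU.
    2:{ intros t Ht. unfold minus, plus, opp, scal; simpl. unfold mult; simpl. unfold g.
        pose proof (sqrt_lt_R0 t Ht). field. repeat split; lra. }
    apply gen_gt0 in HU.
    2:{ intros t Ht. unfold f, RF_integrand. apply exdc. pose proof (P_pos x y z Hx Hy Hz t Ht).
        pose proof (sqrt_lt_R0 t Ht). auto_derive. repeat split; try lra; try nra. pose proof (sqrt_lt_R0 _ H). lra. }
    2:{ intros t Ht. apply Rdiv_lt_0_compat; [|lra].
        pose proof (P_pos x y z Hx Hy Hz t Ht) as HP.
        pose proof (sqrt_lt_R0 t Ht) as Hs. pose proof (sqrt_lt_R0 _ HP) as Hq.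
        pose proof (sqrt_sq t (Rlt_le _ _ Ht)) as Es. pose proof (sqrt_sq _ (Rlt_le _ _ HP)) as Eq.
        unfold f, RF_integrand.
        set (P := (t + x) * (t + y) * (t + z)) in *.
        set (s := sqrt t) in *. set (q := sqrt P) in *.
        assert (Hm: (t - a/2) * q < t * s * (t + a)).
        { destruct (Rle_dec t (a/2)).
          - assert (0 < t * s * (t + a)) by (apply Rmult_lt_0_compat; [apply Rmult_lt_0_compat|]; lra).
            assert ((t - a/2) * q <= 0) by (apply Rmult_le_0_r; lra). lra.
          - apply sq_lt. apply Rmult_le_pos; lra. apply Rmult_le_pos; [apply Rmult_le_pos|]; lra.
            replace ((t - a / 2) * q * ((t - a / 2) * q)) with ((t - a/2)^2 * (q * q)) by ring.
            replace (t * s * (t + a) * (t * s * (t + a))) with (t^2 * (s * s) * (t + a)^2) by ring.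
            rewrite Eq, Es. replace (t^2 * t * (t+a)^2) with (t^3 * (t+a)^2) by ring.
            apply uppoly; try lra.
            assert (Hsum: x + y + z = 3 * a) by (unfold a; field).
            pose proof (amgm3 (t+x) (t+y) (t+z) ltac:(lra) ltac:(lra) ltac:(lra)).
            unfold P. replace ((t + x) + (t + y) + (t + z)) with (3 * (t + a)) in H by lra.
            replace ((3 * (t + a)) ^ 3) with (27 * (t+a)^3) in H by ring. lra. }
        replace (t * / q - (t - a / 2) / (s * (t + a))) with ((t * s * (t + a) - (t - a/2) * q) / (q * s * (t + a))) by (field; lra).
        apply Rdiv_lt_0_compat. lra. apply Rmult_lt_0_compat; [apply Rmult_lt_0_compat|]; lra. }
    unfold minus, plus, opp, scal in HU; simpl in HU. unfold mult in HU; simpl in HU.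
    rewrite ERJ, ERF. rewrite sqrt_div_alt by auto.
    pose proof (sqrt_lt_R0 a Ha) as Hsa. pose proof (sqrt_sq a (Rlt_le _ _ Ha)) as Ea.
    set (sa := sqrt a) in *. set (sp := sqrt p) in *.
    match goal with |- ?L < ?R => assert (E : R - L = sp / PI * (3 / 2 * a * (PI / (sa * sp * (sa + sp))) + - (PI / sp) + (I1 + - (p * I2)))) end.
    { rewrite <- Ep; try rewrite <- Ea. field. repeat split; lra. }
    assert (0 < sp / PI * (3 / 2 * a * (PI / (sa * sp * (sa + sp))) + - (PI / sp) + (I1 + - (p * I2)))).
    { apply Rmult_lt_0_compat; auto. apply Rdiv_lt_0_compat; lra. }
    lra.
Qed.


Lemma part2 x y p : 0 < x -> 0 < y -> 0 < p ->
     RF x y 0 <> PI / (2 * sqrt p) ->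
     exists theta : R,
       theta <> p
       /\ RJ x y 0 p
          = 3 / p * (RF x y 0 - PI / (2 * sqrt p)) * (1 + (theta / p) / (1 - theta / p))
       /\ sqrt (x * y) <= theta /\ theta <= (x + y) / 2
       /\ (theta = sqrt (x * y) <-> x = y)
       /\ (theta = (x + y) / 2 <-> x = y).
Proof.
  intros Hx Hy Hp HRF.
  assert (He2 : 0 < x*y+x*0+y*0) by nra.
  assert (Hx' : 0 <= x) by lra. assert (Hy' : 0 <= y) by lra. assert (Hz : 0 <= 0) by lra.
  set (f := RF_integrand x y 0).
  pose proof (gen_correct _ (ex1 x y 0 Hx' Hy' Hz He2)) as HI1.
  pose proof (gen_correct _ (ex2 x y 0 p Hx' Hy' Hz Hp He2)) as HI2.
  fold f in HI1, HI2.
  set (I1 := RInt_gen f F0 Finf) in *.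
  set (I2 := RInt_gen (fun t => f t / (t + p)) F0 Finf) in *.
  assert (ERF : RF x y 0 = / 2 * I1) by reflexivity.
  assert (ERJ : RJ x y 0 p = 3 / 2 * I2) by reflexivity.
  assert (HPI := PI_RGT_0).
  assert (Hsp := sqrt_lt_R0 p Hp). pose proof (sqrt_sq p (Rlt_le _ _ Hp)) as Ep.
  assert (fc : forall t, 0 < t -> continuous (fun t => f t / (t + p)) t).
  { intros t Ht. apply (cmult f (fun t => / (t + p))). apply f_cont; auto. apply exdc. auto_derive. lra. }
  assert (HI2p : 0 < I2).
  { apply (gen_gt0 _ _ fc); auto. intros t Ht. apply Rdiv_lt_0_compat; [apply (f_pos x y 0); auto|lra]. }
  assert (Hneq : I1 <> PI / sqrt p).
  { intro Q. apply HRF. rewrite ERF, Q. field. lra. }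
  set (m := sqrt (x * y)).
  assert (Hm : 0 < m) by (apply sqrt_lt_R0; nra).
  assert (Em : m * m = x * y) by (apply sqrt_sq; nra).
  assert (Hm2 : 2 * m <= x + y).
  { apply sq_le; try lra. pose proof (Rle_0_sqr (x - y)). unfold Rsqr in *. nra. }
  assert (Hm2s : x <> y -> 2 * m < x + y).
  { intros Nxy. apply sq_lt; try lra. assert (0 < (x - y) * (x - y)).
    { assert (x - y <> 0) by lra. pose proof (Rsqr_pos_lt _ H). unfold Rsqr in *; lra. } nra. }
  assert (Ef : forall t, 0 < t -> f t = / (sqrt t * sqrt ((t + x) * (t + y)))).
  { intros t Ht. unfold f, RF_integrand. rewrite Rplus_0_r. rewrite (Rmult_comm _ t), sqrt_mult; auto. lra. nra. }
  set (theta := (PI / sqrt p - I1 + p * I2) / I2).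
  pose proof (is_RInt_gen_minus _ _ _ _ (is_RInt_gen_plus _ _ _ _ (is_RInt_gen_minus _ _ _ _ (J_int p Hp) HI1) (is_RInt_gen_scal _ p _ HI2))
                 (is_RInt_gen_scal _ m _ HI2)) as H3.
  apply (gen_ext_pos _ (fun t => (sqrt ((t + x) * (t + y)) - t - m) / (sqrt t * sqrt ((t + x) * (t + y)) * (t + p)))) in H3.
  2:{ intros t Ht. unfold minus, plus, opp, scal; simpl. unfold mult; simpl. unfold g. rewrite Ef by auto.
      pose proof (sqrt_lt_R0 t Ht). assert (0 < sqrt ((t + x) * (t + y))) by (apply sqrt_lt_R0; nra).
      field. repeat split; lra. }
  pose proof (is_RInt_gen_minus _ _ _ _ (is_RInt_gen_plus _ _ _ _ (is_RInt_gen_minus _ _ _ _ (is_RInt_gen_scal _ ((x+y)/2) _ HI2) (is_RInt_gen_scal _ p _ HI2)) HI1)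
                 (J_int p Hp)) as H4.
  apply (gen_ext_pos _ (fun t => (t + (x + y) / 2 - sqrt ((t + x) * (t + y))) / (sqrt t * sqrt ((t + x) * (t + y)) * (t + p)))) in H4.
  2:{ intros t Ht. unfold minus, plus, opp, scal; simpl. unfold mult; simpl. unfold g. rewrite Ef by auto.
      pose proof (sqrt_lt_R0 t Ht). assert (0 < sqrt ((t + x) * (t + y))) by (apply sqrt_lt_R0; nra).
      field. repeat split; lra. }
  unfold minus, plus, opp, scal in H3, H4; simpl in H3, H4. unfold mult in H3, H4; simpl in H3, H4.
  assert (V3 : PI / sqrt p + - I1 + p * I2 + - (m * I2) = (theta - m) * I2) by (unfold theta; field; lra).
  assert (V4 : (x + y) / 2 * I2 + - (p * I2) + I1 + - (PI / sqrt p) = ((x + y) / 2 - theta) * I2) by (unfold theta; field; lra).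
  rewrite V3 in H3. rewrite V4 in H4.
  assert (Q : forall t, 0 < t -> 0 < sqrt ((t + x) * (t + y)) /\ sqrt ((t + x) * (t + y)) * sqrt ((t + x) * (t + y)) = (t + x) * (t + y)).
  { intros t Ht. split. apply sqrt_lt_R0; nra. apply sqrt_sq; nra. }
  assert (den : forall t, 0 < t -> 0 < sqrt t * sqrt ((t + x) * (t + y)) * (t + p)).
  { intros t Ht. destruct (Q t Ht). pose proof (sqrt_lt_R0 t Ht). apply Rmult_lt_0_compat; [apply Rmult_lt_0_compat|]; lra. }
  assert (cont3 : forall t, 0 < t -> continuous (fun t => (sqrt ((t + x) * (t + y)) - t - m) / (sqrt t * sqrt ((t + x) * (t + y)) * (t + p))) t).
  { intros t Ht. apply exdc. destruct (Q t Ht). pose proof (sqrt_lt_R0 t Ht). auto_derive. repeat split; try nra. pose proof (den t Ht); lra. }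
  assert (cont4 : forall t, 0 < t -> continuous (fun t => (t + (x + y) / 2 - sqrt ((t + x) * (t + y))) / (sqrt t * sqrt ((t + x) * (t + y)) * (t + p))) t).
  { intros t Ht. apply exdc. destruct (Q t Ht). pose proof (sqrt_lt_R0 t Ht). auto_derive. repeat split; try nra; pose proof (den t Ht); lra. }
  assert (lo : forall t, 0 < t -> t + m <= sqrt ((t + x) * (t + y))).
  { intros t Ht. destruct (Q t Ht). apply sq_le; try lra. rewrite H0. nra. }
  assert (hi : forall t, 0 < t -> sqrt ((t + x) * (t + y)) <= t + (x + y) / 2).
  { intros t Ht. destruct (Q t Ht). apply sq_le; try lra. rewrite H0. pose proof (Rle_0_sqr (x - y)). unfold Rsqr in *. nra. }
  assert (los : x <> y -> forall t, 0 < t -> t + m < sqrt ((t + x) * (t + y))).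
  { intros N t Ht. pose proof (Hm2s N). destruct (Q t Ht). apply sq_lt; try lra. rewrite H1. nra. }
  assert (his : x <> y -> forall t, 0 < t -> sqrt ((t + x) * (t + y)) < t + (x + y) / 2).
  { intros N t Ht. destruct (Q t Ht). apply sq_lt; try lra. rewrite H0.
    assert (0 < (x - y) * (x - y)). { assert (x - y <> 0) by lra. pose proof (Rsqr_pos_lt _ H1). unfold Rsqr in *; lra. } nra. }
  assert (eqs : x = y -> forall t, 0 < t -> sqrt ((t + x) * (t + y)) = t + m /\ t + m = t + (x + y) / 2).
  { intros E t Ht. subst y. unfold m. rewrite !sqrt_square; lra. }
  assert (Z0 : is_RInt_gen (fun _ => 0) F0 Finf 0).
  { pose proof (is_RInt_gen_scal _ 0 _ HI2) as Hz0. unfold scal in Hz0; simpl in Hz0; unfold mult in Hz0; simpl in Hz0.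
    rewrite Rmult_0_l in Hz0. revert Hz0. apply gen_ext_pos. intros; ring. }
  assert (G3 : 0 <= (theta - m) * I2).
  { apply (gen_ge0 _ _ cont3); auto. intros t Ht. apply Rdiv_le_0_compat. pose proof (lo t Ht). lra. apply den; auto. }
  assert (G4 : 0 <= ((x + y) / 2 - theta) * I2).
  { apply (gen_ge0 _ _ cont4); auto. intros t Ht. apply Rdiv_le_0_compat. pose proof (hi t Ht). lra. apply den; auto. }
  exists theta. split; [|split; [|split; [|split; [|split]]]].
  - intro E. apply Hneq. assert (Ht2: PI / sqrt p - I1 + p * I2 = theta * I2) by (unfold theta; field; lra).
    rewrite E in Ht2. lra.
  - rewrite ERJ, ERF. unfold theta.
    assert (H0 : I1 * sqrt p - PI <> 0).
    { intro Q0. apply Hneq. apply (Rmult_eq_reg_r (sqrt p)); [|lra]. field_simplify; lra. }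
    field. repeat split; try lra; try (intro Q0; apply H0; lra).
  - apply Rmult_le_reg_r with I2; auto. nra.
  - apply Rmult_le_reg_r with I2; auto. nra.
  - split.
    + intros E. destruct (Req_dec x y) as [|N]; auto. exfalso.
      assert (0 < (theta - m) * I2).
      { apply (gen_gt0 _ _ cont3); auto. intros t Ht. apply Rdiv_lt_0_compat. pose proof (los N t Ht). lra. apply den; auto. }
      rewrite E in H. lra.
    + intros E. apply gen_ext_pos with (h := fun _ => 0) in H3.
      2:{ intros t Ht. destruct (eqs E t Ht) as [E1 _]. rewrite E1. unfold Rdiv. ring. }
      apply gen_unique in H3. apply gen_unique in Z0. rewrite Z0 in H3. change (0 = (theta - m) * I2) in H3.
      assert (Hq0 : theta - m = 0). { apply Rmult_eq_reg_r with I2. lra. lra. } lra.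
  - split.
    + intros E. destruct (Req_dec x y) as [|N]; auto. exfalso.
      assert (0 < ((x + y) / 2 - theta) * I2).
      { apply (gen_gt0 _ _ cont4); auto. intros t Ht. apply Rdiv_lt_0_compat. pose proof (his N t Ht). lra. apply den; auto. }
      rewrite E in H. lra.
    + intros E. apply gen_ext_pos with (h := fun _ => 0) in H4.
      2:{ intros t Ht. destruct (eqs E t Ht) as [E1 E2]. rewrite E1, E2. unfold Rdiv. ring. }
      apply gen_unique in H4. apply gen_unique in Z0. rewrite Z0 in H4. change (0 = ((x + y) / 2 - theta) * I2) in H4.
      assert ((x + y) / 2 - theta = 0). { apply Rmult_eq_reg_r with I2. lra. lra. } lra.
Qed.

Theorem mainTheorem10 :
  forall x y z p : R,
    0 <= x -> 0 <= y -> 0 <= z ->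
    ~ (x = 0 /\ y = 0) -> ~ (x = 0 /\ z = 0) -> ~ (y = 0 /\ z = 0) ->
    0 < p ->
    (let a := (x + y + z) / 3 in
     let b := sqrt 3 / 2 * sqrt (x * y + x * z + y * z) in
     exists r : R,
       RJ x y z p = 3 / p * RF x y z + 3 * PI / (2 * Rpower p (3 / 2)) * (-1 + r)
       /\ sqrt (b / p) / (1 + sqrt (b / p)) < r
       /\ r < 3 / 2 * (sqrt (a / p) / (1 + sqrt (a / p))))
    /\
    (z = 0 -> 0 < x -> 0 < y ->
     RF x y 0 <> PI / (2 * sqrt p) ->
     exists theta : R,
       theta <> p
       /\ RJ x y 0 p
          = 3 / p * (RF x y 0 - PI / (2 * sqrt p)) * (1 + (theta / p) / (1 - theta / p))
       /\ sqrt (x * y) <= theta /\ theta <= (x + y) / 2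
       /\ (theta = sqrt (x * y) <-> x = y)
       /\ (theta = (x + y) / 2 <-> x = y)).
Proof.
  intros x y z p Hx Hy Hz Nxy Nxz Nyz Hp.
  assert (He2 : 0 < x*y+x*z+y*z).
  { destruct (Rle_lt_or_eq_dec 0 x Hx) as [x0|x0]; destruct (Rle_lt_or_eq_dec 0 y Hy) as [y0|y0];
    destruct (Rle_lt_or_eq_dec 0 z Hz) as [z0|z0]; subst; try tauto; nra. }
  split.
  - apply part1; auto.
  - intros Hz0 Hx0 Hy0 HRF. subst z. apply part2; auto.
Qed.
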